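(* Let $\mathcal T=(\mathbf i,E)$ be a forest with vertices $\mathbf i\subset[N]$, and let $F$ be any function of the adjacency matrix. For each edge $e=\{i_e,i'_e\}\in E$ associate indices $j_e,j'_e\in[N]$, and write $\mathbf j=\{j_e,j'_e\}_{e\in E}$. If all indices in $\mathbf i,\mathbf j$ are distinct, then $$\mathbb E\Big[F(A)\prod_{e\in E}\chi_{i_ei'_e}^{j_ej'_e}(A)\Big]=\mathbb E\Big[F\Big(A+\sum_{e\in E}\xi_{i_ei'_e}^{j_ej'_e}\Big)\prod_{e\in E}\chi_{i_ej_e}^{i'_ej'_e}(A)\Big].$$ Moreover, if $i\in\mathbf i$ and the indices of $\mathbf i$ together with $j,k,m,\ell$ are all distinct, then $$\mathbb E\big[A_{\mathcal T}\chi_{ik}^{m\ell}(A)F(A)\big]=\mathbb E\big[A_{\mathcal T}\chi_{im}^{k\ell}(A)F(A+\xi_{ik}^{m\ell})\big],\qquad \mathbb E\big[A_{\mathcal T}\chi_{jk}^{m\ell}(A)F(A)\big]=\mathbb E\big[A_{\mathcal T}\chi_{jm}^{k\ell}(A)F(A+\xi_{jk}^{m\ell})\big].$$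
   Context: $\mathbb E$ is expectation over $A$, the adjacency matrix of a uniformly random $d$-regular simple graph on $[N]=\{1,\dots,N\}$. $(\Delta_{ij})_{ab}=\delta_{ia}\delta_{jb}+\delta_{ib}\delta_{ja}$, $\xi_{ij}^{k\ell}=\Delta_{ij}+\Delta_{k\ell}-\Delta_{ik}-\Delta_{j\ell}$, and $\chi_{ij}^{k\ell}(A)=A_{ij}A_{k\ell}(1-A_{ik})(1-A_{j\ell})$. A forest $\mathcal T=(\mathbf i,E)$ is a finite simple graph whose vertex set $\mathbf i$ is a set of distinct elements of $[N]$ and which has no cycles (isolated vertices allowed); $A_{\mathcal T}=\prod_{\{a,b\}\in E}A_{ab}$ ($A_{\mathcal T}=1$ if $E=\emptyset$). $F$ may be evaluated at arbitrary real symmetric matrices. *)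

(* Defs.v *)
From HB Require Import structures.
From mathcomp Require Import all_boot all_order all_algebra.
From mathcomp Require Import reals.
Set Implicit Arguments. Unset Strict Implicit. Unset Printing Implicit Defensive.
Import Order.TTheory GRing.Theory Num.Theory.
Local Open Scope ring_scope.

Section Defs.
Variable R : realType.
Variable N : nat.

Definition graphN := {ffun 'I_N * 'I_N -> bool}.

Definition is_dreg (d : nat) (g : graphN) : bool :=
  [&& [forall i, ~~ g (i, i)],
      [forall i, forall j, g (i, j) == g (j, i)] &
      [forall i, #|[set j | g (i, j)]| == d]].

Definition adj (g : graphN) : 'M[R]_N := \matrix_(i, j) (g (i, j))%:R.

Definition Exp (d : nat) (F : 'M[R]_N -> R) : R :=
  (\sum_(g : graphN | is_dreg d g) F (adj g)) / (#|[set g : graphN | is_dreg d g]|)%:R.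

Definition Delta (i j : 'I_N) : 'M[R]_N :=
  \matrix_(a, b) (((i == a) && (j == b))%:R + ((i == b) && (j == a))%:R).

Definition xi (i j k l : 'I_N) : 'M[R]_N :=
  Delta i j + Delta k l - Delta i k - Delta j l.

Definition chi (i j k l : 'I_N) (A : 'M[R]_N) : R :=
  A i j * A k l * (1 - A i k) * (1 - A j l).

End Defs.

(* A forest T = (V, E) on distinct vertices V of [N], with the m edges
   listed (each with a chosen orientation) as e |-> {ie e, ie' e}. *)
Section Forest.
Variable N m : nat.
Variable V : {set 'I_N}.
Variables ie ie' : 'I_m -> 'I_N.

Definition forest_edge (x y : 'I_N) : bool :=
  [exists e, ((ie e == x) && (ie' e == y)) || ((ie e == y) && (ie' e == x))].

Definition is_forest : Prop :=
  (forall e, [/\ ie e \in V, ie' e \in V & ie e != ie' e]) /\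
  (* the edges are pairwise distinct (E is a set of unordered pairs) *)
  (forall e f, e != f ->
     ~ ((ie e == ie f) && (ie' e == ie' f) || (ie e == ie' f) && (ie' e == ie f))) /\
  (forall s : seq 'I_N, uniq s -> (3 <= size s)%N -> ~~ cycle forest_edge s).

End Forest.

Definition A_T (R : realType) (N m : nat) (ie ie' : 'I_m -> 'I_N) (A : 'M[R]_N) : R :=
  \prod_(e < m) A (ie e) (ie' e).

Arguments is_dreg {N} d g.
Arguments adj {R N} g.
Arguments Exp {R N} d F.
Arguments Delta {R N} i j.
Arguments xi {R N} i j k l.
Arguments chi {R N} i j k l A.
Arguments forest_edge {N m} ie ie' x y.
Arguments is_forest {N m} V ie ie'.
Arguments A_T {R N m} ie ie' A.

(* Main.v *)
Require Import Defs.
From HB Require Import structures.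
From mathcomp Require Import all_boot all_order all_algebra.
From mathcomp Require Import reals.
Import Order.TTheory GRing.Theory Num.Theory.
Local Open Scope ring_scope.
Set Implicit Arguments. Unset Strict Implicit. Unset Printing Implicit Defensive.

Section Sw.
Variable R : realType.
Variable N : nat.
Implicit Types (a b c e u v x y : 'I_N) (g h : graphN N).

Definition upe x y u v := ((u == x) && (v == y)) || ((u == y) && (v == x)).
Definition inS a b c e x y := [|| upe x y a b, upe x y c e, upe x y a c | upe x y b e].
Definition tog a b c e g : graphN N :=
  [ffun p => if inS a b c e p.1 p.2 then ~~ g p else g p].
Definition dist4 a b c e := [&& a != b, a != c, a != e, b != c, b != e & c != e].
Definition P1 a b c e g := [&& g (a, b), g (c, e), ~~ g (a, c) & ~~ g (b, e)].

Lemma upeC x y u v : upe x y u v = upe y x u v.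
Proof. by rewrite /upe orbC. Qed.

Lemma upe_diag x u v : u != v -> upe x x u v = false.
Proof.
move=> uv; apply/negbTE; apply: contra uv.
by case/orP=> /andP[/eqP -> /eqP ->].
Qed.

Lemma upe_trans x y u v u' v' : upe x y u v -> upe x y u' v' -> upe u v u' v'.
Proof.
case/orP=> /andP[/eqP <- /eqP <-] //.
by rewrite upeC.
Qed.

Lemma inSC a b c e x y : inS a b c e x y = inS a b c e y x.
Proof. by rewrite /inS !(upeC x y). Qed.

Lemma inS_swap a b c e x y : inS a b c e x y = inS a c b e x y.
Proof.
rewrite /inS; by case: (upe x y a b); case: (upe x y c e);
  case: (upe x y a c); case: (upe x y b e).
Qed.

Lemma tog_swap a b c e : tog a b c e =1 tog a c b e.
Proof. by move=> g; apply/ffunP=> p; rewrite !ffunE inS_swap. Qed.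

Lemma togK a b c e : involutive (tog a b c e).
Proof.
move=> g; apply/ffunP=> p; rewrite !ffunE.
by case: (inS a b c e p.1 p.2); rewrite ?negbK.
Qed.

Lemma adjE g x y : (adj g : 'M[R]_N) x y = (g (x, y))%:R.
Proof. by rewrite mxE. Qed.

Lemma chiE a b c e g : chi a b c e (adj g : 'M[R]_N) = (P1 a b c e g)%:R.
Proof.
rewrite /chi !adjE /P1.
by case: (g (a, b)); case: (g (c, e)); case: (g (a, c)); case: (g (b, e));
  rewrite /= ?subrr ?subr0 ?mulr0 ?mul0r ?mulr1.
Qed.

Lemma DeltaE u v x y : u != v -> (Delta u v : 'M[R]_N) x y = (upe x y u v)%:R.
Proof.
move=> uv; rewrite mxE /upe.
case E1: (u == x); case E2: (v == y); case E3: (u == y); case E4: (v == x);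
  rewrite /= ?addr0 ?add0r //.
by move: uv; rewrite (eqP E1) (eqP E4) eqxx.
Qed.

Lemma DeltaE' u v x y : u != v ->
  ((u == x) && (v == y))%:R + ((u == y) && (v == x))%:R = (upe x y u v)%:R :> R.
Proof. by move=> uv; rewrite -(DeltaE x y uv) mxE. Qed.

Lemma Delta0 u v x y : ~~ upe x y u v -> (Delta u v : 'M[R]_N) x y = 0.
Proof.
by rewrite mxE /upe negb_or => /andP[/negbTE -> /negbTE ->]; rewrite addr0.
Qed.

Lemma neqC (T : eqType) (x y : T) : x != y -> (y == x) = false.
Proof. by rewrite eq_sym => /negbTE. Qed.
Ltac d4 H := case/and5P: H => /[dup] /negbTE ab /neqC ba /[dup] /negbTE ac /neqC ca
  /[dup] /negbTE ae /neqC ea /[dup] /negbTE bc /neqC cb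
  /andP[/[dup] /negbTE be /neqC eb /[dup] /negbTE ce /neqC ec].
Ltac sd := rewrite ?eqxx; repeat match goal with H : (?x == ?y) = false |- context [?x == ?y] => rewrite H end;
  rewrite /= ?andbF ?orbF ?andbT ?orbT.

Lemma key (hp p1 p2 p3 p4 : bool) : (p1 -> hp) -> (p2 -> hp) -> (p3 -> ~~ hp) ->
  (p4 -> ~~ hp) -> ~~ (p1 && p2) -> ~~ (p1 && p3) -> ~~ (p1 && p4) ->
  ~~ (p2 && p3) -> ~~ (p2 && p4) -> ~~ (p3 && p4) ->
  ((if [|| p1, p2, p3 | p4] then ~~ hp else hp)%:R
    + (p1%:R + p2%:R - p3%:R - p4%:R) = hp%:R :> R).
Proof.
case: hp; case: p1; case: p2; case: p3; case: p4 => //= h1 h2 h3 h4 *;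
  try by [move: (h1 isT) | move: (h2 isT) | move: (h3 isT) | move: (h4 isT)].
all: by rewrite ?(addr0, add0r, subr0, sub0r, subrr, addrN, addNr).
Qed.

Lemma card_swap (f f' : 'I_N -> bool) u w : u != w -> f u -> ~~ f w -> ~~ f' u -> f' w ->
  (forall j, j != u -> j != w -> f' j = f j) ->
  #|[set j | f' j]| = #|[set j | f j]|.
Proof.
move=> uw fu fw fu' fw' H.
rewrite (cardsD1 w [set j | f' j]) (cardsD1 u [set j | f j]) !inE fw' fu.
congr (_ + _)%N; apply: eq_card => j; rewrite !inE.
case: (eqVneq j w) => [->|jw]; first by rewrite eq_sym (negbTE uw) (negbTE fw).
case: (eqVneq j u) => [->|ju]; first by rewrite (negbTE fu').
by rewrite /= H.
Qed.

Lemma deg_tog a b c e h : dist4 a b c e -> P1 a b c e h ->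
  (forall i j, h (i, j) = h (j, i)) ->
  forall v, #|[set j | tog a b c e h (v, j)]| = #|[set j | h (v, j)]|.
Proof.
move=> D P S v; have D' := D; d4 D'.
case/and4P: P => hab hce hac hbe.
have hba : h (b, a) by rewrite S.
have hec : h (e, c) by rewrite S.
have hca : ~~ h (c, a) by rewrite S.
have heb : ~~ h (e, b) by rewrite S.
case: (eqVneq v a) => [->|va].
  apply: (card_swap (u:=b) (w:=c)); rewrite ?ffunE /= /inS /upe; sd; rewrite ?negbK => //.
  by move=> j /neqC jb /neqC jc; rewrite ffunE /= /inS /upe; sd.
case: (eqVneq v b) => [->|vb].
  apply: (card_swap (u:=a) (w:=e)); rewrite ?ffunE /= /inS /upe; sd; rewrite ?negbK => //.
  by move=> j /neqC jb /neqC jc; rewrite ffunE /= /inS /upe; sd.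
case: (eqVneq v c) => [->|vc].
  apply: (card_swap (u:=e) (w:=a)); rewrite ?ffunE /= /inS /upe; sd; rewrite ?negbK => //.
  by move=> j /neqC jb /neqC jc; rewrite ffunE /= /inS /upe; sd.
case: (eqVneq v e) => [->|ve].
  apply: (card_swap (u:=c) (w:=b)); rewrite ?ffunE /= /inS /upe; sd; rewrite ?negbK => //.
  by move=> j /neqC jb /neqC jc; rewrite ffunE /= /inS /upe; sd.
move/neqC: va => va; move/neqC: vb => vb; move/neqC: vc => vc; move/neqC: ve => ve.
by apply: eq_card => j; rewrite !inE ffunE /= /inS /upe; sd.
Qed.

Lemma dreg_tog d a b c e h : dist4 a b c e -> P1 a b c e h ->
  is_dreg d h -> is_dreg d (tog a b c e h).
Proof.
move=> D P /and3P[/forallP irr /forallP sym /forallP deg].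
have S i j : h (i, j) = h (j, i) by apply/eqP; move/forallP: (sym i).
have := D; case/and5P => nab nac nae nbc /andP[nbe nce].
apply/and3P; split.
- by apply/forallP=> i; rewrite ffunE /= /inS !upe_diag ?(irr i).
- by apply/forallP=> i; apply/forallP=> j; rewrite !ffunE /= inSC S.
- by apply/forallP=> i; rewrite deg_tog //; exact: deg i.
Qed.

Lemma P1_tog a b c e h : dist4 a b c e ->
  P1 a c b e (tog a b c e h) = P1 a b c e h.
Proof.
move=> D; d4 D; rewrite /P1 !ffunE /= /inS /upe; sd; rewrite !negbK.
by case: (h (a, b)); case: (h (c, e)); case: (h (a, c)); case: (h (b, e)).
Qed.

Lemma upe_h h x y u v : (forall i j, h (i, j) = h (j, i)) -> upe x y u v -> h (x, y) = h (u, v).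
Proof. by move=> S; case/orP=> /andP[/eqP <- /eqP <-] //. Qed.

Lemma adj_tog a b c e h : dist4 a b c e -> P1 a b c e h ->
  (forall i j, h (i, j) = h (j, i)) ->
  (adj (tog a b c e h) : 'M[R]_N) + xi a b c e = adj h.
Proof.
move=> D P S; have := D; case/and5P => nab nac nae nbc /andP[nbe nce].
d4 D; case/and4P: P => hab hce hac hbe.
apply/matrixP=> x y; rewrite mxE /xi !mxE !DeltaE' // ffunE /= /inS.
have ex u v u' v' : ~~ upe u v u' v' -> ~~ (upe x y u v && upe x y u' v').
  by move=> H; apply/negP=> /andP[U1 U2]; move: H; rewrite (upe_trans U1 U2).
apply: key.
- by move=> U; rewrite (upe_h S U).
- by move=> U; rewrite (upe_h S U).
- by move=> U; rewrite (upe_h S U).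
- by move=> U; rewrite (upe_h S U).
all: by apply: ex; rewrite /upe; sd.
Qed.

Lemma switch1 d (H : 'M[R]_N -> R) a b c e : dist4 a b c e ->
  \sum_(g | is_dreg d g) H (adj g) * chi a b c e (adj g)
  = \sum_(g | is_dreg d g) H (adj g + xi a b c e) * chi a c b e (adj g).
Proof.
move=> D.
rewrite big_mkcond [RHS]big_mkcond [RHS](reindex_inj (inv_inj (togK a b c e))) /=.
apply: eq_bigr => h _.
rewrite !chiE P1_tog //.
case P: (P1 a b c e h); last by rewrite !mulr0; case: ifP; case: ifP.
case Dh: (is_dreg d h).
  have Sh : forall i j, h (i, j) = h (j, i).
    by move=> i j; case/and3P: Dh => _ /forallP sym _; apply/eqP; move/forallP: (sym i).
  by rewrite dreg_tog // adj_tog.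
case Dt: (is_dreg d (tog a b c e h)) => //.
have : is_dreg d (tog a c b e (tog a b c e h)).
  apply: dreg_tog => //; first by move: D; rewrite /dist4; 
    by case/and5P => -> -> -> ; rewrite eq_sym => -> /andP[-> ->].
  by rewrite P1_tog.
by rewrite -tog_swap togK Dh.
Qed.

Definition ntouch a' b' c' e' a b c e :=
  [&& ~~ inS a' b' c' e' a b, ~~ inS a' b' c' e' c e,
      ~~ inS a' b' c' e' a c & ~~ inS a' b' c' e' b e].

Lemma xi0 a b c e x y : ~~ inS a b c e x y -> (xi a b c e : 'M[R]_N) x y = 0.
Proof.
rewrite /inS !negb_or => /and4P[/andP[/negbTE h1 /negbTE h2] /andP[/negbTE h3 /negbTE h4]
  /andP[/negbTE h5 /negbTE h6] /andP[/negbTE h7 /negbTE h8]].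
rewrite /xi !mxE h1 h2 h3 h4 h5 h6 h7 h8 /=.
by rewrite !(addr0, subr0).
Qed.

Lemma chi_inv (A B : 'M[R]_N) a b c e : B a b = 0 -> B c e = 0 -> B a c = 0 -> B b e = 0 ->
  chi a b c e (A + B) = chi a b c e A /\ chi a c b e (A + B) = chi a c b e A.
Proof. by rewrite /chi !mxE => -> -> -> ->; rewrite !addr0. Qed.

Lemma sumxi0 (I : eqType) (fa fb fc fe : I -> 'I_N) (s : seq I) x y :
  (forall t, t \in s -> ~~ inS (fa t) (fb t) (fc t) (fe t) x y) ->
  (\sum_(t <- s) (xi (fa t) (fb t) (fc t) (fe t) : 'M[R]_N)) x y = 0.
Proof. by move=> H; rewrite summxE big1_seq // => t /andP[_ ts]; exact: xi0 (H t ts). Qed.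

Lemma switchs d (I : eqType) (fa fb fc fe : I -> 'I_N) (s : seq I) : uniq s ->
  {in s, forall t, dist4 (fa t) (fb t) (fc t) (fe t)} ->
  {in s &, forall t t', t != t' ->
     ntouch (fa t') (fb t') (fc t') (fe t') (fa t) (fb t) (fc t) (fe t)} ->
  forall H : 'M[R]_N -> R,
  \sum_(g | is_dreg d g) H (adj g) * \prod_(t <- s) chi (fa t) (fb t) (fc t) (fe t) (adj g)
  = \sum_(g | is_dreg d g) H (adj g + \sum_(t <- s) xi (fa t) (fb t) (fc t) (fe t))
       * \prod_(t <- s) chi (fa t) (fc t) (fb t) (fe t) (adj g).
Proof.
elim: s => [|q s IH] Hu Hd Hn H.
  by apply: eq_bigr => g _; rewrite !big_nil addr0.
move: Hu => /andP[qs Hu].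
have qin : q \in q :: s by rewrite mem_head.
have tin t : t \in s -> t \in q :: s by move=> ts; rewrite in_cons ts orbT.
have tq t : t \in s -> t != q by move=> ts; apply: contraNneq qs => <-.
have N1 t : t \in s -> ntouch (fa q) (fb q) (fc q) (fe q) (fa t) (fb t) (fc t) (fe t).
  by move=> ts; apply: Hn => //; [exact: tin | exact: tq].
have N2 t : t \in s -> ntouch (fa t) (fb t) (fc t) (fe t) (fa q) (fb q) (fc q) (fe q).
  by move=> ts; apply: Hn => //; [exact: tin | rewrite eq_sym; exact: tq].
transitivity (\sum_(g | is_dreg d g) (H (adj g) *
   \prod_(t <- s) chi (fa t) (fb t) (fc t) (fe t) (adj g)) * chi (fa q) (fb q) (fc q) (fe q) (adj g)).
  by apply: eq_bigr => g _; rewrite big_cons [chi _ _ _ _ _ * _]mulrC mulrA.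
rewrite (switch1 d (fun B => H B * \prod_(t <- s) chi (fa t) (fb t) (fc t) (fe t) B) (Hd q qin)).
transitivity (\sum_(g | is_dreg d g) (H (adj g + xi (fa q) (fb q) (fc q) (fe q)) *
   chi (fa q) (fc q) (fb q) (fe q) (adj g)) * \prod_(t <- s) chi (fa t) (fb t) (fc t) (fe t) (adj g)).
  apply: eq_bigr => g _; rewrite mulrAC; congr (_ * _ * _).
  apply: eq_big_seq => t ts; case/and4P: (N1 t ts) => h1 h2 h3 h4.
  by case: (chi_inv (adj g) (xi0 h1) (xi0 h2) (xi0 h3) (xi0 h4)).
have Hd' : {in s, forall t, dist4 (fa t) (fb t) (fc t) (fe t)}.
  by move=> t ts; apply: Hd; apply: tin.
have Hn' : {in s &, forall t t', t != t' ->
     ntouch (fa t') (fb t') (fc t') (fe t') (fa t) (fb t) (fc t) (fe t)}.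
  by move=> t t' ts t's; apply: Hn; apply: tin.
rewrite (IH Hu Hd' Hn' (fun B => H (B + xi (fa q) (fb q) (fc q) (fe q)) *
   chi (fa q) (fc q) (fb q) (fe q) B)).
apply: eq_bigr => g _; rewrite big_cons mulrA.
set S := \sum_(t <- s) _.
have E : forall x y, (x, y) \in [:: (fa q, fb q); (fc q, fe q); (fa q, fc q); (fb q, fe q)] ->
   S x y = 0.
  move=> x y xy; apply: sumxi0 => t ts; case/and4P: (N2 t ts) => h1 h2 h3 h4.
  by move: xy; rewrite !inE => /or4P[] /eqP [-> ->].
have E1 : S (fa q) (fb q) = 0 by apply: E; rewrite !inE eqxx ?orbT.
have E2 : S (fc q) (fe q) = 0 by apply: E; rewrite !inE eqxx ?orbT.
have E3 : S (fa q) (fc q) = 0 by apply: E; rewrite !inE eqxx ?orbT.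
have E4 : S (fb q) (fe q) = 0 by apply: E; rewrite !inE eqxx ?orbT.
have [_ ->] := chi_inv (adj g) E1 E2 E3 E4; congr (H _ * _ * _).
by rewrite big_cons -/S -addrA [S + _]addrC.
Qed.

Lemma neqV (V : {set 'I_N}) u w : u \in V -> w \notin V -> (u == w) = false.
Proof. by move=> hu hw; apply/negbTE; apply: contraNneq hw => <-. Qed.
Lemma neqV' (V : {set 'I_N}) u w : u \in V -> w \notin V -> (w == u) = false.
Proof. by move=> hu hw; rewrite eq_sym (neqV hu hw). Qed.

Lemma ntouch_forest (V : {set 'I_N}) i i' j j' k k' l l' :
  i \in V -> i' \in V -> k \in V -> k' \in V -> j \notin V -> j' \notin V ->
  l \notin V -> l' \notin V -> l != j -> l != j' -> l' != j -> l' != j' ->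
  ~~ ((k == i) && (k' == i') || (k == i') && (k' == i)) -> ntouch k k' l l' i i' j j'.
Proof.
move=> hi hi' hk hk' hj hj' hl hl' /negbTE lj /negbTE lj' /negbTE l'j /negbTE l'j' E.
have kj := neqV hk hj; have kj' := neqV hk hj'; have k'j := neqV hk' hj;
have k'j' := neqV hk' hj'.
have li := neqV' hi hl; have li' := neqV' hi' hl; have l'i := neqV' hi hl';
have l'i' := neqV' hi' hl'.
by rewrite /ntouch /inS /upe; sd.
Qed.

Lemma notouchV (V : {set 'I_N}) a b c e x y : b \notin V -> c \notin V -> e \notin V ->
  x \in V -> y \in V -> ~~ inS a b c e x y.
Proof.
move=> hb hc he hx hy.
have bx := neqV' hx hb; have by' := neqV' hy hb; have cx := neqV' hx hc;
have cy := neqV' hy hc; have ex := neqV' hx he; have ey := neqV' hy he.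
by rewrite /inS /upe; sd.
Qed.

End Sw.

Lemma uniq_map_inj (T1 T2 : eqType) (f : T1 -> T2) s :
  uniq (map f s) -> {in s &, injective f}.
Proof.
elim: s => //= x s IH /andP[fx u] a b; rewrite !in_cons.
case/orP=> [/eqP->|ahs]; case/orP=> [/eqP->|bs] //.
- by move=> E; move: fx; rewrite E map_f.
- by move=> E; move: fx; rewrite -E map_f.
- exact: IH.
Qed.

Lemma facts (T : finType) (U : finType) (f g : T -> U) (V : {set U}) :
  uniq (enum V ++ [seq f e | e : T] ++ [seq g e | e : T]) ->
  [/\ forall e, f e \notin V, forall e, g e \notin V, injective f, injective g
    & forall e e', f e != g e'].
Proof.
rewrite !cat_uniq => /and3P[_ H1 /and3P[U1 H2 U2]].
split.
- move=> e; apply: contra H1 => fe; apply/hasP; exists (f e); last by rewrite mem_enum.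
  by rewrite mem_cat image_f.
- move=> e; apply: contra H1 => fe; apply/hasP; exists (g e); last by rewrite mem_enum.
  by rewrite mem_cat image_f ?orbT.
- by move: U1; rewrite /image_mem => /uniq_map_inj U1 x y E; apply: U1 => //; rewrite mem_enum.
- by move: U2; rewrite /image_mem => /uniq_map_inj U2 x y E; apply: U2 => //; rewrite mem_enum.
- move=> e e'; apply/eqP => E; move: H2 => /hasP; apply; exists (g e').
    exact: image_f.
  by rewrite -E image_f.
Qed.

Unset Implicit Arguments.

Theorem proposition3p1 (R : realType) (N d m : nat) (V : {set 'I_N})
    (ie ie' : 'I_m -> 'I_N) :
  is_forest V ie ie' ->
  (forall (F : 'M[R]_N -> R) (je je' : 'I_m -> 'I_N),
     uniq (enum V ++ [seq je e | e : 'I_m] ++ [seq je' e | e : 'I_m]) ->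
     Exp d (fun A => F A * \prod_(e < m) chi (ie e) (ie' e) (je e) (je' e) A)
     = Exp d (fun A => F (A + \sum_(e < m) xi (ie e) (ie' e) (je e) (je' e))
                       * \prod_(e < m) chi (ie e) (je e) (ie' e) (je' e) A)) /\
  (forall (F : 'M[R]_N -> R) (i j k mm l : 'I_N),
     i \in V -> uniq (enum V ++ [:: j; k; mm; l]) ->
     Exp d (fun A => A_T ie ie' A * chi i k mm l A * F A)
     = Exp d (fun A => A_T ie ie' A * chi i mm k l A * F (A + xi i k mm l)) /\
     Exp d (fun A => A_T ie ie' A * chi j k mm l A * F A)
     = Exp d (fun A => A_T ie ie' A * chi j mm k l A * F (A + xi j k mm l))).
Proof.
move=> [Hf1 [Hf2 Hf3]]; split.
  move=> F je je' /facts [jV j'V jinj j'inj jj'].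
  rewrite /Exp; congr (_ / _).
  apply: switchs; first exact: index_enum_uniq.
    move=> t _; have [iV i'V ii'] := Hf1 t.
    by rewrite /dist4 ii' (neqV iV (jV t)) (neqV iV (j'V t)) (neqV i'V (jV t))
      (neqV i'V (j'V t)) (jj' t t).
  move=> t t' _ _ tt'; have [iV i'V ii'] := Hf1 t; have [kV k'V kk'] := Hf1 t'.
  apply: (ntouch_forest iV i'V kV k'V (jV t) (j'V t) (jV t') (j'V t')).
  - by apply/eqP => /jinj E; rewrite E eqxx in tt'.
  - exact: jj'.
  - by rewrite eq_sym jj'.
  - by apply/eqP => /j'inj E; rewrite E eqxx in tt'.
  - by apply/negP; apply: Hf2; rewrite eq_sym.
have P2 (a k mm l : 'I_N) (F : 'M[R]_N -> R) : dist4 a k mm l ->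
    k \notin V -> mm \notin V -> l \notin V ->
    Exp d (fun A => A_T ie ie' A * chi a k mm l A * F A)
    = Exp d (fun A => A_T ie ie' A * chi a mm k l A * F (A + xi a k mm l)).
  move=> D kV mV lV; rewrite /Exp; congr (_ / _).
  transitivity (\sum_(g | is_dreg d g) (A_T ie ie' (adj g) * F (adj g)) * chi a k mm l (adj g)).
    by apply: eq_bigr => g _; rewrite mulrAC.
  rewrite (switch1 d (fun B => A_T ie ie' B * F B) D).
  apply: eq_bigr => g _; rewrite mulrAC; congr (_ * _ * _).
  rewrite /A_T; apply: eq_bigr => t _; have [iV i'V _] := Hf1 t.
  rewrite mxE xi0 ?addr0 //; exact: (notouchV _ kV mV lV iV i'V).
move=> F i j k mm l iV Hu.
move: Hu; rewrite cat_uniq => /and3P[_ H1 U].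
move: H1; rewrite /= !mem_enum orbF !negb_or => /and4P[jV kV mV lV].
move: U; rewrite /= !inE !negb_or andbT => /and3P[/and3P[jk jm jl] /andP[km kl] ml].
split; apply: P2 => //.
  by rewrite /dist4 (neqV iV kV) (neqV iV mV) (neqV iV lV) km kl ml.
by rewrite /dist4 jk jm jl km kl ml.
Qed.
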